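(* If $G$ is a connected graph, then $F_c(G)\ge b(G)+1$, and this bound is sharp.
   Context: Forcing process: given a set of initially colored vertices, at each step a colored vertex with exactly one non-colored neighbor forces (colors) that neighbor. A set $S\subseteq V(G)$ is a forcing set if iterating this process from $S$ eventually colors all vertices; it is a connected forcing set if moreover the induced subgraph $G[S]$ is connected. $F_c(G)$ is the minimum cardinality of a connected forcing set of $G$. A block of $G$ is a maximal connected subgraph with no cut vertex of its own; every block of order at least $2$ is either $2$-connected or isomorphic to $K_2$. $b(G)$ denotes the number of $2$-connected blocks of $G$ (blocks of order at least $2$ not isomorphic to $K_2$). Graphs are assumed to have no isolated vertices. *)

(* Defs.v *)
From mathcomp Require Import all_boot.
Set Implicit Arguments. Unset Strict Implicit. Unset Printing Implicit Defensive.

Section Graphs.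
Variables (T : finType) (e : rel T).

Definition simple_graph : Prop := symmetric e /\ irreflexive e.
Definition graph_connected : Prop := forall x y : T, connect e x y.
Definition no_isolated : Prop := forall x : T, exists y, e x y.

Definition force_step (A : {set T}) : {set T} :=
  A :|: [set y | [exists x, [&& x \in A, e x y &
                   [forall z, (e x z && (z != y)) ==> (z \in A)]]]].

(* the final colored set: the process stabilises after at most #|T| rounds *)
Definition force_closure (S : {set T}) : {set T} := iter #|T| force_step S.

Definition forcing_set (S : {set T}) : bool := force_closure S == [set: T].

Definition induced_connected (S : {set T}) : bool :=
  [forall x in S, forall y in S,
     connect [rel u v | [&& e u v, u \in S & v \in S]] x y].

Definition connected_forcing_set (S : {set T}) : bool :=
  forcing_set S && induced_connected S.

Definition Fc : nat :=
  \big[minn/#|T|]_(S : {set T} | connected_forcing_set S) #|S|.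

Definition no_cut_vertex (B : {set T}) : bool :=
  induced_connected B && [forall v in B, induced_connected (B :\ v)].

Definition is_block (B : {set T}) : bool := maxset no_cut_vertex B.

(* b(G): number of 2-connected blocks, i.e. blocks of order >= 3
   (order-2 blocks are K_2) *)
Definition b2 : nat := #|[set B : {set T} | is_block B & 3 <= #|B|]|.

End Graphs.

(* Main.v *)
Require Import Defs.
From mathcomp Require Import all_boot.
From mathcomp Require Import zify.
From Stdlib Require Import Lia.
Set Implicit Arguments. Unset Strict Implicit. Unset Printing Implicit Defensive.

Section Gen.
Variables (T : finType) (e : rel T).
Hypothesis Hs : symmetric e.
Hypothesis Hi : irreflexive e.
Implicit Types (S A C P B : {set T}) (x y z a c u v w : T) (p q : seq T).

Definition ir (S : {set T}) := [rel u v | [&& e u v, u \in S & v \in S]].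

Lemma ir_sym S : symmetric (ir S).
Proof. by move=> x y /=; rewrite Hs; case: (x \in S); case: (y \in S); rewrite ?andbF ?andbT. Qed.

Lemma conn_sym S x y : connect (ir S) x y = connect (ir S) y x.
Proof. exact: (sym_connect_sym (ir_sym S)). Qed.

Lemma conn_mono S S' x y : S \subset S' -> connect (ir S) x y -> connect (ir S') x y.
Proof.
move=> /subsetP sub; apply: connect_sub => u v /= /and3P[euv uS vS].
by apply: connect1; rewrite /= euv !sub.
Qed.

Lemma icP S : reflect (forall x y, x \in S -> y \in S -> connect (ir S) x y)
  (induced_connected e S).
Proof.
apply: (iffP idP).
  by move=> /forallP H x y xS yS; move: (H x); rewrite xS /= => /forallP /(_ y); rewrite yS.
by move=> H; apply/forallP => x; apply/implyP => xS; apply/forallP => y; apply/implyP => yS; apply: H.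
Qed.

Lemma ic_root S a : a \in S -> (forall x, x \in S -> connect (ir S) x a) -> induced_connected e S.
Proof.
move=> aS H; apply/icP => x y xS yS; apply: connect_trans (H x xS) _.
by rewrite conn_sym; apply: H.
Qed.

Lemma ic_union A C a c : induced_connected e A -> induced_connected e C ->
  a \in A -> c \in C -> (a == c) || e a c -> induced_connected e (A :|: C).
Proof.
move=> /icP hA /icP hC aA cC hac.
have aU : a \in A :|: C by rewrite inE aA.
have cU : c \in A :|: C by rewrite inE cC orbT.
apply: (ic_root aU) => x; rewrite inE => /orP[xA|xC].
  by apply: conn_mono (hA x a xA aA); apply: subsetUl.
apply: connect_trans (conn_mono (subsetUr A C) (hC x c xC cC)) _.
case/orP: hac => [/eqP->|eac]; first exact: connect0.
by rewrite conn_sym; apply: connect1; rewrite /= eac aU cU.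
Qed.

Lemma ic1 x : induced_connected e [set x].
Proof. by apply/icP => u v; rewrite !inE => /eqP-> /eqP->; apply: connect0. Qed.

Lemma ic_path x p : path e x p -> induced_connected e [set z in x :: p].
Proof.
have xin : x \in [set z in x :: p] by rewrite inE mem_head.
move=> hp; apply: (ic_root xin).
elim: p x hp xin => [|y p IH] x /=.
  by move=> _ _ z; rewrite inE mem_seq1 => /eqP->; apply: connect0.
move=> /andP[exy hp] xin z; rewrite inE in_cons => /orP[/eqP->|zin]; first exact: connect0.
have sub : [set z in y :: p] \subset [set z in x :: y :: p].
  by apply/subsetP => u; rewrite !inE => ->; rewrite orbT.
have yin : y \in [set z in y :: p] by rewrite inE mem_head.
apply: connect_trans (conn_mono sub (IH y hp yin z _)) _; first by rewrite inE.
by rewrite conn_sym; apply: connect1; rewrite /= exy xin !inE eqxx orbT.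
Qed.

Lemma ir_path_all S x p : path (ir S) x p -> path e x p /\ all (mem S) p.
Proof.
elim: p x => [|y p IH] x //= /andP[/and3P[exy xS yS] /IH[h1 h2]].
by rewrite exy h1 yS h2.
Qed.

Lemma conn_path S x z : connect (ir S) x z ->
  exists p, [/\ path e x p, uniq (x :: p), last x p = z & all (mem S) p].
Proof.
move=> /connectP[q hq ->]; case: (shortenP hq) => p hp up _.
by case: (ir_path_all hp) => h1 h2; exists p.
Qed.

Lemma conn_step S x z : connect (ir S) x z -> x != z -> exists2 w, w \in S & e x w.
Proof.
move=> /connectP[[|w q] /= hq ->]; first by rewrite eqxx.
by case/andP: hq => /and3P[exw _ wS] _ _; exists w.
Qed.

Lemma boundary (P : {set T}) S a p : path (ir S) a p -> a \in P -> last a p \notin P ->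
  exists u v, [/\ u \in P, v \notin P & ir S u v].
Proof.
elim: p a => [|y p IH] a /=; first by move=> _ ->.
move=> /andP[hay hp] aP hl; case yP: (y \in P); first exact: IH hp yP hl.
by exists a, y; rewrite aP yP.
Qed.


Lemma setD1_id A v : v \notin A -> A :\ v = A.
Proof. by move=> h; apply/setP => z; rewrite !inE; case: (eqVneq z v) => // ->; rewrite (negbTE h). Qed.

Lemma ncvP B : no_cut_vertex e B -> induced_connected e B /\ forall v, induced_connected e (B :\ v).
Proof.
move=> /andP[hB /forallP hv]; split=> // v; case vB: (v \in B).
  by move: (hv v); rewrite vB.
by rewrite setD1_id ?vB.
Qed.

Lemma ncv_intro B : induced_connected e B -> (forall v, v \in B -> induced_connected e (B :\ v)) ->
  no_cut_vertex e B.
Proof. by move=> hB hv; rewrite /no_cut_vertex hB; apply/forallP => v; apply/implyP; apply: hv. Qed.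

Lemma ncv_union B1 B2 x y : no_cut_vertex e B1 -> no_cut_vertex e B2 -> x != y ->
  x \in B1 -> x \in B2 -> y \in B1 -> y \in B2 -> no_cut_vertex e (B1 :|: B2).
Proof.
move=> /ncvP[h1 h1v] /ncvP[h2 h2v] xy x1 x2 y1 y2.
apply: ncv_intro => [|v _]; first by apply: (ic_union h1 h2 x1 x2); rewrite eqxx.
rewrite setDUl; case: (eqVneq x v) => [xv|xv].
  have yv : y != v by rewrite -xv eq_sym.
  by apply: (ic_union (h1v v) (h2v v) (a := y) (c := y)); rewrite ?inE ?yv ?y1 ?y2 ?eqxx.
by apply: (ic_union (h1v v) (h2v v) (a := x) (c := x)); rewrite ?inE ?xv ?x1 ?x2 ?eqxx.
Qed.

Lemma block_inter B1 B2 x y : is_block e B1 -> is_block e B2 -> x != y ->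
  x \in B1 -> x \in B2 -> y \in B1 -> y \in B2 -> B1 = B2.
Proof.
move=> /maxsetP[n1 m1] /maxsetP[n2 m2] xy x1 x2 y1 y2.
have hu := ncv_union n1 n2 xy x1 x2 y1 y2.
by rewrite -(m1 _ hu (subsetUl _ _)) -[in RHS](m2 _ hu (subsetUr _ _)).
Qed.

Lemma nbr2 B x y : no_cut_vertex e B -> 3 <= #|B| -> x \in B ->
  exists2 w, w \in B & e x w && (w != y).
Proof.
move=> hB h3 xB; case/ncvP: (hB) => hB0 hBv.
have : 0 < #|B :\: [set x; y]|.
  have := cardsID [set x; y] B; have := subset_leq_card (subsetIr B [set x; y]).
  rewrite cards2; case: (x != y) => /=; lia.
case/card_gt0P => z; rewrite !inE negb_or => /andP[/andP[zx zy] zB].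
case: (eqVneq x y) => [xy|xy].
  have xz : x != z by rewrite eq_sym.
  have [w wB exw] := conn_step (icP _ hB0 x z xB zB) xz.
  exists w => //; rewrite exw /=; apply/eqP => wy; subst.
  by rewrite Hi in exw.
have xC : x \in B :\ y by rewrite !inE xy.
have zC : z \in B :\ y by rewrite !inE zy.
have xz : x != z by rewrite eq_sym.
have [w] := conn_step (icP _ (hBv y) x z xC zC) xz.
by rewrite !inE => /andP[wy wB] exw; exists w; rewrite // exw.
Qed.

Lemma split_eq s v : v \in s -> exists p1 p2, s = p1 ++ v :: p2.
Proof. by case/splitPr => p1 p2; exists p1, p2. Qed.

Lemma attach A w s a c : induced_connected e A -> path e w s -> a \in A ->
  c \in w :: s -> e a c -> induced_connected e (A :|: [set z in w :: s]).
Proof.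
move=> hA hp aA cs eac; apply: (ic_union hA (ic_path hp) aA (c := c)); first by rewrite inE.
by rewrite eac orbT.
Qed.

Lemma set_nil : [set z in ([::] : seq T)] = set0.
Proof. by apply/setP => z; rewrite !inE. Qed.

Lemma ear B y y' x p : is_block e B -> y \in B -> y' \in B -> y != y' ->
  uniq (x :: p) -> path e x p -> e y x -> e (last x p) y' ->
  all (fun z => z \notin B) (x :: p) -> False.
Proof.
move=> bB yB y'B yy' up hp eyx el /allP nB.
case/maxsetP: (bB) => ncB mB.
set X := [set z in x :: p].
have hX := ic_path hp.
case/ncvP: (ncB) => hB hBv.
have ey'l : e y' (last x p) by rewrite Hs.
have lX : last x p \in X by rewrite inE mem_last.
have xX : x \in X by rewrite inE mem_head.
suff ncU : no_cut_vertex e (B :|: X).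
  have := mB _ ncU (subsetUl _ _) => eq; move: (nB x (mem_head _ _)).
  by rewrite -eq inE xX orbT.
apply: ncv_intro; first by apply: (ic_union hB hX yB xX); rewrite eyx orbT.
move=> v vU; case vB: (v \in B); last (rewrite inE vB /= in vU; rename vU into vX).
  have vX : v \notin X by apply/negP; rewrite inE => /nB; rewrite vB.
  rewrite setDUl (setD1_id vX).
  case: (eqVneq y v) => [yv|yv].
    apply: (ic_union (hBv v) hX (a := y') _ lX); last by rewrite ey'l orbT.
    by rewrite !inE y'B andbT -yv eq_sym.
  apply: (ic_union (hBv v) hX (a := y) _ xX); last by rewrite eyx orbT.
  by rewrite !inE yB yv.
rewrite inE in vX; have [p1 [p2 E]] := split_eq vX.
have up' := up; rewrite E cat_uniq /= in up'.
case/and4P: up' => _ /norP[vp1 _] vp2 _.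
have -> : (B :|: X) :\ v = B :|: [set z in p1] :|: [set z in p2].
  apply/setP => z; rewrite /X E !inE mem_cat in_cons.
  case: (eqVneq z v) => [->|zv] /=; first by rewrite vB (negbTE vp1) (negbTE vp2).
  by rewrite orbA.
have hp' : path e x p := hp.
have h1 : induced_connected e (B :|: [set z in p1]).
  case: p1 E vp1 => [|x1 p1'] E vp1; first by rewrite set_nil setU0.
  case: E => <- pE; rewrite pE cat_path in hp'; case/andP: hp' => hp1 _.
  by apply: (attach hB hp1 yB (mem_head _ _) eyx).
case: p2 E vp2 => [|w p2'] E vp2; first by rewrite set_nil setU0.
have hw : path e v (w :: p2').
  move: hp; rewrite -/(path e x p) .
  case: p1 E {vp1 h1} => [|x1 p1'] E; first by case: E => -> ->.
  by case: E => -> ->; rewrite cat_path => /andP[_ /=] /andP[_ ->].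
have lw : last x p = last w p2'.
  case: p1 E {vp1 h1 hw} => [|x1 p1'] E; first by case: E => -> ->.
  by case: E => -> ->; rewrite /= last_cat.
case/andP: hw => _ hw.
apply: (attach h1 hw (a := y') _ (mem_last w p2')); [by rewrite !inE y'B | by rewrite -lw].
Qed.

Lemma ear_walk B y y' x p : is_block e B -> y \in B -> y' \in B -> y != y' ->
  path e x p -> e y x -> e (last x p) y' ->
  all (fun z => z \notin B) (x :: p) -> False.
Proof.
move=> bB yB y'B yy' hp eyx el /allP nB.
case: (shortenP hp) el => p' hp' up' sub el.
apply: (ear bB yB y'B yy' up' hp' eyx el); apply/allP => z; rewrite in_cons => /orP[/eqP->|zp].
  by apply: nB; rewrite mem_head.
by apply: nB; rewrite in_cons (sub _ zp) orbT.
Qed.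


Definition uprop A B := forall u v, u \in A -> u \in B -> v \in A -> v \in B -> u = v.

Lemma fs_new A y : y \in force_step e A -> y \notin A ->
  exists x, [/\ x \in A, e x y & forall z, e x z -> z != y -> z \in A].
Proof.
rewrite /force_step !inE => /orP[->//|/existsP[x /and3P[xA exy /forallP hx]]] _.
by exists x; split=> // z ezx zy; move: (hx z); rewrite ezx zy.
Qed.

Lemma fs_sub A : A \subset force_step e A.
Proof. exact: subsetUl. Qed.

Lemma fs_ic A : induced_connected e A -> induced_connected e (force_step e A).
Proof.
move=> /icP hA.
have H z : z \in force_step e A -> exists2 a, a \in A & connect (ir (force_step e A)) z a.
  move=> zA'; case zA: (z \in A); first by exists z => //; apply: connect0.
  have [x [xA exz _]] := fs_new zA' (negbT zA).
  exists x => //; apply: connect1; rewrite /= Hs exz zA' /=.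
  exact: (subsetP (fs_sub A)).
apply/icP => x y xA' yA'; have [a aA ha] := H x xA'; have [b bA hb] := H y yA'.
apply: connect_trans ha _; rewrite conn_sym in hb; apply: connect_trans hb.
exact: conn_mono (fs_sub A) (hA a b aA bA).
Qed.

Lemma fs_uprop A B : is_block e B -> 3 <= #|B| -> induced_connected e A ->
  uprop A B -> uprop (force_step e A) B.
Proof.
move=> bB h3 hA uA; have ncB := maxsetp bB.
case: (pickP (fun c => (c \in A) && (c \in B))) => [c /andP[cA cB] | none].
  suff H : forall y, y \in force_step e A -> y \in B -> y = c.
    by move=> u v u1 u2 v1 v2; rewrite (H u u1 u2) (H v v1 v2).
  move=> y yA' yB; case yA: (y \in A); first exact: uA.
  have [x [xA exy hx]] := fs_new yA' (negbT yA).
  case xB: (x \in B).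
    have [w wB /andP[exw wy]] := nbr2 y ncB h3 xB.
    have wA := hx w exw wy.
    have wx := uA w x wA wB xA xB; subst w.
    by rewrite Hi in exw.
  have [p [hp up lp ap]] := conn_path (icP _ hA c x cA xA).
  case: p hp up lp ap => [|x0 p'] /=; first by move=> _ _ cx; rewrite -cx cB in xB.
  move=> /andP[ecx hp] /andP[cp _] lp ap.
  have cy : c != y by apply/eqP => cy; rewrite -cy cA in yA.
  exfalso; apply: (ear_walk bB cB yB cy hp ecx); first by rewrite lp.
  apply/allP => z zp; apply/negP => zB.
  have zA : z \in A.
    by move: zp; rewrite in_cons => /orP[/eqP->|zp']; case/andP: ap => // _ /allP; apply.
  have := uA z c zA zB cA cB => zc; subst z.
  by rewrite zp in cp.
move=> u v u1 u2 v1 v2; case: (eqVneq u v) => // uv; exfalso.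
have uA' : u \notin A by apply/negP => uA'; move: (none u); rewrite uA' u2.
have vA : v \notin A by apply/negP => vA'; move: (none v); rewrite vA' v2.
have [x1 [x1A ex1u _]] := fs_new u1 uA'.
have [x2 [x2A ex2v _]] := fs_new v1 vA.
have [p [hp _ lp ap]] := conn_path (icP _ hA x1 x2 x1A x2A).
apply: (ear_walk bB u2 v2 uv hp); first by rewrite Hs.
  by rewrite lp.
apply/allP => z zp; apply/negP => zB.
have zA : z \in A.
  by move: zp; rewrite in_cons => /orP[/eqP->//|]; move/allP: ap; apply.
by move: (none z); rewrite zA zB.
Qed.

Lemma iter_inv S B : is_block e B -> 3 <= #|B| -> induced_connected e S -> uprop S B ->
  forall t, induced_connected e (iter t (force_step e) S) /\ uprop (iter t (force_step e) S) B.
Proof.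
move=> bB h3 hS uS; elim=> [|t [h1 h2]] //=.
by split; [apply: fs_ic | apply: fs_uprop].
Qed.

Lemma forcing_lemma S B : connected_forcing_set e S -> is_block e B -> 3 <= #|B| ->
  2 <= #|S :&: B|.
Proof.
move=> /andP[/eqP hf hc] bB h3; rewrite leqNgt; apply/negP; rewrite ltnS => /card_le1_eqP h.
have uS : uprop S B.
  by move=> u v u1 u2 v1 v2; apply: (h v u); rewrite inE ?u1 ?u2 ?v1 ?v2.
have [_ hu] := iter_inv bB h3 hc uS #|T|.
move: hu; rewrite -/(force_closure e S) hf => hu.
have : 1 < #|B| by apply: leq_trans h3.
case/card_gt1P => x [y [xB yB /eqP xy]]; apply: xy; apply: hu; rewrite ?inE //.
Qed.


Definition cntset P := [set B | [&& is_block e B, 3 <= #|B| & 2 <= #|P :&: B|]].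

Lemma new_block P s B : s \notin P -> 2 <= #|(s |: P) :&: B| -> ~~ (2 <= #|P :&: B|) ->
  [/\ s \in B, exists2 a, a \in P & a \in B & uprop P B].
Proof.
move=> sP h2 hn.
have sB : s \in B.
  case sB: (s \in B) => //; suff E : (s |: P) :&: B = P :&: B by move: hn; rewrite -E h2.
  apply/setP => z; rewrite !inE; case: (eqVneq z s) => [->|] /=; last by []; by rewrite sB andbF.
split=> //.
  case/card_gt1P: h2 => x [y []]; rewrite !inE.
  case: (eqVneq x s) => [-> _|xs] /=.
    by case/andP => /orP[/eqP->|yP] yB; [rewrite eqxx | move=> _; exists y].
  by case/andP => xP xB _ _; exists x.
move: hn; rewrite -ltnNge ltnS => /card_le1_eqP h u v u1 u2 v1 v2.
by apply: (h v u); rewrite inE ?u1 ?u2 ?v1 ?v2.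
Qed.

Lemma cnt_step P s : induced_connected e P -> s \notin P ->
  #|cntset (s |: P)| <= #|cntset P| + 1.
Proof.
move=> hP sP.
rewrite -(cardsID (cntset P) (cntset (s |: P))).
apply: leq_add; first exact: subset_leq_card (subsetIr _ _).
apply/card_le1_eqP => B1 B2; rewrite !inE.
move=> /andP[n1 /and3P[bB1 h31 c1]] /andP[n2 /and3P[bB2 h32 c2]].
rewrite bB1 h31 /= in n1; rewrite bB2 h32 /= in n2.
have [sB1 [a1 a1P a1B1] u1] := new_block sP c1 n1.
have [sB2 [a2 a2P a2B2] u2] := new_block sP c2 n2.
case: (eqVneq B2 B1) => // neq; exfalso.
have a1s : a1 != s by apply/eqP => a1s; rewrite -a1s a1P in sP.
case a1B2 : (a1 \in B2).
  by move/eqP: neq; apply; apply: (block_inter bB2 bB1 a1s).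
have a12 : a1 != a2 by apply/eqP => a12; rewrite a12 a2B2 in a1B2.
have [p [hp up lp ap]] := conn_path (icP _ hP a1 a2 a1P a2P).
have [ncB2 _] := ncvP (maxsetp bB2).
have [q [hq uq lq aq]] := conn_path (icP _ ncB2 a2 s a2B2 sB2).
case: p hp up lp ap => [|x0 p']; first by move=> _ _ /= l; rewrite l eqxx in a12.
move=> /= /andP[ea1x0 hp'] /andP[a1p _] lp ap.
case/lastP: q hq uq lq aq => [|q' z]; first by move=> _ _ /= l; rewrite -l a2P in sP.
rewrite last_rcons => hq uq zs aq; subst z.
move: hq; rewrite rcons_path => /andP[hq' elq].
move: uq; rewrite /= rcons_uniq => /andP[_ /andP[sq' _]].
apply: (ear_walk bB1 a1B1 sB1 a1s (x := x0) (p := p' ++ q')).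
- by rewrite cat_path hp' lp hq'.
- exact: ea1x0.
- by rewrite last_cat lp.
apply/allP => z; rewrite -cat_cons mem_cat => /orP[zp|zq]; apply/negP => zB1.
  have zP : z \in P.
    by move: zp; rewrite in_cons => /orP[/eqP->|zp']; case/andP: ap => // _ /allP; apply.
  by have := u1 z a1 zP zB1 a1P a1B1 => zeq; rewrite -zeq zp in a1p.
have zB2 : z \in B2 by move/allP: aq; apply; rewrite mem_rcons in_cons zq orbT.
have zs : z != s by apply/eqP => zs; rewrite -zs zq in sq'.
by move/eqP: neq; apply; apply: (block_inter bB2 bB1 zs).
Qed.

Lemma cnt_bound X x0 : induced_connected e X -> x0 \in X -> #|cntset X| < #|X|.
Proof.
move=> hX x0X.
have grow : forall k, k < #|X| -> exists P, [/\ P \subset X, induced_connected e P,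
    #|P| = k.+1 & #|cntset P| <= k].
  elim=> [_|k IH hk].
    exists [set x0]; split; rewrite ?sub1set ?cards1 ?ic1 //.
    rewrite leqn0 cards_eq0; apply/eqP/setP => B; rewrite !inE.
    have := subset_leq_card (subsetIl [set x0] B); rewrite cards1 => h.
    by rewrite (ltnNge 1) h !andbF.
  have [P [PX hP cP nP]] := IH (ltnW hk).
  have : ~~ (X \subset P).
    by apply/negP => /subset_leq_card; rewrite cP leqNgt hk.
  case/subsetPn => z zX zP.
  have : 0 < #|P| by rewrite cP.
  case/card_gt0P => x1 x1P.
  have x1X : x1 \in X by apply: (subsetP PX).
  have /connectP[r hr lr] := icP _ hX x1 z x1X zX.
  have lrP : last x1 r \notin P by rewrite -lr.
  have [u [v [uP vP /and3P[euv uX vX]]]] := boundary hr x1P lrP.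
  exists (v |: P); split.
  - by rewrite subUset sub1set vX PX.
  - by apply: (ic_union (ic1 v) hP (a := v) (c := u)); rewrite ?inE ?eqxx ?uP // Hs euv orbT.
  - by rewrite cardsU1 vP cP.
  - by apply: leq_trans (cnt_step hP vP) _; rewrite addn1.
have X0 : 0 < #|X| by apply/card_gt0P; exists x0.
have hk : #|X|.-1 < #|X| by rewrite prednK.
have [P [PX _ cP nP]] := grow #|X|.-1 hk.
have eqPX : P = X by apply/eqP; rewrite eqEcard PX cP prednK ?leqnn.
by move: nP; rewrite eqPX -ltnS prednK.
Qed.

End Gen.

Lemma iter_sup (T : finType) (e : rel T) (A : {set T}) n : A \subset iter n (force_step e) A.
Proof. elim: n => //= n IH; exact: subset_trans IH (fs_sub e _). Qed.

Lemma iter_set0 (T : finType) (e : rel T) n : iter n (force_step e) set0 = set0.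
Proof.
elim: n => //= n ->; apply/setP => z; rewrite /force_step !inE /=.
by apply/existsP => -[x]; rewrite inE.
Qed.

Lemma part1 (T : finType) (e : rel T) :
  simple_graph e -> 0 < #|T| -> no_isolated e -> graph_connected e -> b2 e + 1 <= Fc e.
Proof.
case=> Hs Hi hT _ hc.
have key S : connected_forcing_set e S -> b2 e + 1 <= #|S|.
  move=> hS; have hb : b2 e <= #|cntset e S|.
    apply: subset_leq_card; apply/subsetP => B; rewrite !inE => /andP[bB h3].
    by rewrite bB h3 (forcing_lemma Hs Hi hS bB h3).
  case: (set_0Vmem S) => [S0 | [x0 x0S]].
    move: hS; rewrite S0 /connected_forcing_set /forcing_set /force_closure iter_set0.
    move=> /andP[/eqP h _]; move: hT; rewrite -cardsT -h cards0 //.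
  case/andP: hS => _ hS.
  by rewrite addn1; apply: leq_ltn_trans hb (cnt_bound Hs hS x0S).
rewrite /Fc; apply: (big_ind (fun n => b2 e + 1 <= n)).
- rewrite -cardsT; apply: key; apply/andP; split.
    by rewrite /forcing_set eqEsubset subsetT iter_sup.
  apply/forallP => x; apply/implyP => _; apply/forallP => y; apply/implyP => _.
  apply: (connect_sub _ (hc x y)) => u v euv; apply: connect1; by rewrite /= euv !in_setT.
- by move=> x y hx hy; rewrite leq_min hx hy.
- by move=> S; apply: key.
Qed.

Definition adjn (i j : nat) : bool :=
  (j == i.+1) || (i == j.+1) || (~~ odd i && (j == i.+2)) || (~~ odd j && (i == j.+2)).

Lemma clique_ncv (T : finType) (e : rel T) (B : {set T}) :
  (forall x y, x \in B -> y \in B -> x != y -> e x y) -> no_cut_vertex e B.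
Proof.
have H (C : {set T}) : (forall x y, x \in C -> y \in C -> x != y -> e x y) -> induced_connected e C.
  move=> hC; apply/forallP => x; apply/implyP => xC; apply/forallP => y; apply/implyP => yC.
  case: (eqVneq x y) => [->|xy]; first exact: connect0.
  by apply: connect1; rewrite /= hC ?xC ?yC.
move=> hB; rewrite /no_cut_vertex H //; apply/forallP => v; apply/implyP => _.
by apply: H => x y; rewrite !inE => /andP[_ xB] /andP[_ yB]; apply: hB.
Qed.

Lemma bigmin_le (I : eqType) (r : seq I) (P : pred I) (F : I -> nat) d i :
  i \in r -> P i -> \big[minn/d]_(j <- r | P j) F j <= F i.
Proof.
elim: r => // j r IH; rewrite in_cons big_cons => /orP[/eqP<-|ir] Pi; first by rewrite Pi geq_minl.
by case: (P j); [apply: leq_trans (geq_minr _ _) (IH ir Pi) | exact: IH].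
Qed.

Section Ex.
Variable k : nat.
Definition N := k.*2.+2.
Definition ex_e : rel 'I_N := fun u v => adjn u v.

Lemma ex_sym : symmetric ex_e.
Proof. by move=> u v; rewrite /ex_e /adjn; apply/idP/idP; lia. Qed.

Lemma ex_irr : irreflexive ex_e.
Proof. by move=> u; rewrite /ex_e /adjn; apply/negbTE; lia. Qed.

Lemma ex_conn : graph_connected ex_e.
Proof.
have H : forall m (hm : m < N), connect ex_e ord0 (Ordinal hm).
  elim=> [hm|m IH hm]; first by apply: eq_connect0; apply: val_inj.
  have hm' : m < N by apply: ltnW.
  apply: connect_trans (IH hm') _; apply: connect1; rewrite /ex_e /adjn /=; lia.
have H' x : connect ex_e ord0 x by case: x => m hm; apply: H.
move=> x y; apply: connect_trans (H' y); rewrite (sym_connect_sym ex_sym); apply: H'.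
Qed.

Lemma ex_noiso : no_isolated ex_e.
Proof.
move=> [m hm]; case: (ltnP m.+1 N) => h.
  by exists (Ordinal h); rewrite /ex_e /adjn /=; lia.
have h' : m.-1 < N by lia.
by exists (Ordinal h'); move: h hm; rewrite /ex_e /adjn /N /=; lia.
Qed.

Definition exS : {set 'I_N} := [set i : 'I_N | ~~ odd i].

Lemma exS_ic : induced_connected ex_e exS.
Proof.
have H : forall m (hm : m.*2 < N), connect (ir ex_e exS) ord0 (Ordinal hm).
  elim=> [hm|m IH hm]; first by apply: eq_connect0; apply: val_inj.
  have hm' : m.*2 < N by lia.
  apply: connect_trans (IH hm') _; apply: connect1; rewrite /= /ex_e /adjn !inE /=.
  by apply/andP; split; [|apply/andP; split]; lia.
apply/icP => x y; rewrite !inE => hx hy.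
have Hx (z : 'I_N) : ~~ odd z -> connect (ir ex_e exS) ord0 z.
  move=> hz; have zN := ltn_ord z; have hz' : (z./2).*2 < N by lia.
  have -> : z = Ordinal hz' by apply: val_inj => /=; lia.
  exact: H.
apply: connect_trans (Hx y hy); rewrite (conn_sym ex_sym); exact: Hx.
Qed.

Lemma exS_force : forcing_set ex_e exS.
Proof.
have H : forall t (i : 'I_N), ~~ odd i || (i < t.*2) -> i \in iter t (force_step ex_e) exS.
  elim=> [i|t IH i hi] /=; first by rewrite orbF => h; rewrite inE.
  case h : (~~ odd i || (i < t.*2)); first exact: (subsetP (fs_sub ex_e _)) _ (IH _ h).
  have iN := ltn_ord i; have ht : t.*2 < N by lia.
  rewrite /force_step !inE; apply/orP; right; apply/existsP; exists (Ordinal ht).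
  apply/and3P; split.
  - by apply: IH; rewrite /=; lia.
  - by rewrite /ex_e /adjn /=; lia.
  apply/forallP => z; apply/implyP => /andP[ez zi]; apply: IH.
  move: ez zi; rewrite /ex_e /adjn /= -(inj_eq val_inj) /=; lia.
rewrite /forcing_set /force_closure eqEsubset subsetT /=.
apply/subsetP => i _; apply: H; rewrite card_ord; apply/orP; right.
by apply: leq_trans (ltn_ord i) _; rewrite /N; lia.
Qed.

Lemma Fc_ex : Fc ex_e <= k.+1.
Proof.
have hS : connected_forcing_set ex_e exS by rewrite /connected_forcing_set exS_force exS_ic.
apply: leq_trans (bigmin_le _ _ (mem_index_enum exS) hS) _.
pose f (j : 'I_k.+1) : 'I_N := inord (j.*2).
have sub : exS \subset f @: setT.
  apply/subsetP => i; rewrite inE => hi; apply/imsetP.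
  have hj : i./2 < k.+1 by have := ltn_ord i; rewrite /N; lia.
  exists (Ordinal hj) => //; apply: val_inj; rewrite /f /= inordK; last by rewrite /N; lia.
  by have := ltn_ord i; lia.
apply: leq_trans (subset_leq_card sub) _.
by apply: leq_trans (leq_imset_card _ _) _; rewrite cardsT card_ord.
Qed.

Definition tri (i : 'I_k) : {set 'I_N} := [set inord (i.*2); inord (i.*2).+1; inord (i.*2).+2].

Lemma tri_vals (i : 'I_k) :
  [/\ nat_of_ord (inord (i.*2) : 'I_N) = i.*2, nat_of_ord (inord (i.*2).+1 : 'I_N) = (i.*2).+1
    & nat_of_ord (inord (i.*2).+2 : 'I_N) = (i.*2).+2].
Proof. by have hi := ltn_ord i; split; rewrite inordK // /N; lia. Qed.

Lemma tri_ncv i : no_cut_vertex ex_e (tri i).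
Proof.
have [v0 v1 v2] := tri_vals i.
apply: clique_ncv => x y; rewrite !inE -!val_eqE /= v0 v1 v2 => hx hy; move=> xy.
move: hx hy xy; rewrite /ex_e /=; move: (nat_of_ord x) (nat_of_ord y) => a b; rewrite /adjn; lia.
Qed.

Lemma tri_card i : 3 <= #|tri i|.
Proof.
have [v0 v1 v2] := tri_vals i.
rewrite (cardsD1 (inord (i.*2))) !inE eqxx /= add1n ltnS.
apply/card_gt1P; exists (inord (i.*2).+1), (inord (i.*2).+2).
rewrite !inE -!val_eqE /= v0 v1 v2; split; lia.
Qed.

Definition bl (i : 'I_k) : {set 'I_N} := s2val (maxset_exists (tri_ncv i)).

Lemma bl_block i : is_block ex_e (bl i).
Proof. exact: (s2valP (maxset_exists (tri_ncv i))). Qed.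

Lemma bl_tri i : tri i \subset bl i.
Proof. exact: (s2valP' (maxset_exists (tri_ncv i))). Qed.

Lemma sep (A : {set 'I_N}) (c x y : 'I_N) : ~~ odd c -> c \notin A -> x < c ->
  connect (ir ex_e A) x y -> y < c.
Proof.
move=> oc cA xc /connectP[p hp ->]; elim: p x xc hp => //= z p IH x xc.
move=> /andP[/and3P[exz _ zA] hp]; apply: IH hp.
have zc : val z != val c by rewrite (inj_eq val_inj); apply/eqP => zc; rewrite -zc zA in cA.
move: exz zc xc oc; rewrite /ex_e /=; move: (nat_of_ord x) (nat_of_ord z) (nat_of_ord c) => a b d; rewrite /adjn; lia.
Qed.

Lemma bl_inj_lt (i j : 'I_k) : i < j -> bl i = bl j -> False.
Proof.
move=> hij eq.
have [_ a1 c1] := tri_vals i; have [_ b1 _] := tri_vals j.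
set a := (inord (i.*2).+1 : 'I_N) in a1; set c := (inord (i.*2).+2 : 'I_N) in c1.
set b := (inord (j.*2).+1 : 'I_N) in b1.
have aB : a \in bl i by apply: (subsetP (bl_tri i)); rewrite !inE eqxx orbT.
have cB : c \in bl i by apply: (subsetP (bl_tri i)); rewrite !inE eqxx !orbT.
have bB : b \in bl i by rewrite eq; apply: (subsetP (bl_tri j)); rewrite !inE eqxx orbT.
have [_ hv] := ncvP (maxsetp (bl_block i)).
have ac : a != c by rewrite -val_eqE /= a1 c1; lia.
have bc : b != c by rewrite -val_eqE /= b1 c1; have := ltn_ord i; lia.
have aC : a \in bl i :\ c by rewrite !inE ac.
have bC : b \in bl i :\ c by rewrite !inE bc.
have oc : ~~ odd c by rewrite c1 /= odd_double.
have cn : c \notin bl i :\ c by rewrite !inE eqxx.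
have alt : a < c by rewrite a1 c1.
have /icP hcc := hv c.
have := sep oc cn alt (hcc a b aC bC).
by rewrite b1 c1; lia.
Qed.

Lemma b2_ex : k <= b2 ex_e.
Proof.
have inj : injective bl.
  move=> i j h; case: (ltngtP i j) => [hij|hij|hij]; last exact: val_inj.
    by exfalso; apply: bl_inj_lt hij h.
  by exfalso; apply: bl_inj_lt hij (esym h).
have -> : k = #|bl @: [set: 'I_k]| by rewrite card_imset // cardsT card_ord.
rewrite /b2; apply: subset_leq_card; apply/subsetP => B /imsetP[i _ ->].
rewrite inE bl_block /=; exact: leq_trans (tri_card i) (subset_leq_card (bl_tri i)).
Qed.

End Ex.

Theorem theorem5 :
  (forall (T : finType) (e : rel T),
      simple_graph e -> 0 < #|T| -> no_isolated e -> graph_connected e ->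
      b2 e + 1 <= Fc e)
  /\
  (forall k : nat, exists (T : finType) (e : rel T),
      [/\ simple_graph e, 0 < #|T|, no_isolated e, graph_connected e
        & Fc e = b2 e + 1 /\ b2 e = k]).
Proof.
split; first exact: part1.
move=> k; exists ('I_(N k) : finType), (@ex_e k).
have sg : simple_graph (@ex_e k) by split; [exact: ex_sym | exact: ex_irr].
have h0 : 0 < #|'I_(N k)| by rewrite card_ord.
have h1 := part1 sg h0 (@ex_noiso k) (@ex_conn k).
have h2 := @Fc_ex k; have h3 := @b2_ex k.
split=> //; [exact: ex_noiso | exact: ex_conn | ].
move: h1 h2 h3; move: (Fc _) (b2 _) => a b; lia.
Qed.
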